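(* Let $\mathcal{H}$ be a real Hilbert space, $A_i:\mathcal{H}\rightrightarrows\mathcal{H}$ and $B_i:\mathcal{H}\to\mathcal{H}$ operators for $i=1,\dots,N$, $W$ a mixing matrix, $\gamma_1,\dots,\gamma_N>0$, $\Gamma=\mathrm{diag}(\gamma_1,\dots,\gamma_N)$, $K=((I-W)/2)^{1/2}\succeq 0$, $c>\|\Gamma K^2\Gamma\|$, and $M=(cI-K\Gamma^2K)^{1/2}\succ0$. Define $A(\mathbf{x})=A_1(x_1)\times\dots\times A_N(x_N)$, $B(\mathbf{x})=(B_1(x_1),\dots,B_N(x_N))$ on $\mathcal{H}^N$, and define $\widetilde A,\widetilde C:\mathcal{H}^N\times\mathcal{H}^N\rightrightarrows\mathcal{H}^N\times\mathcal{H}^N$ and $\widetilde B:\mathcal{H}^N\times\mathcal{H}^N\to\mathcal{H}^N\times\mathcal{H}^N$ by $\widetilde A(\mathbf{z},\tilde{\mathbf{z}})=\big(\Gamma A(\Gamma\mathbf{z}),N_{\{0\}}(\tilde{\mathbf{z}})\big)$, $\widetilde B(\mathbf{z},\tilde{\mathbf{z}})=(\Gamma B(\Gamma\mathbf{z}),0)$, $\widetilde C(\mathbf{z},\tilde{\mathbf{z}})=\big(\Gamma K N_{\{0\}}(K\Gamma\mathbf{z}+M\tilde{\mathbf{z}}),\,M N_{\{0\}}(K\Gamma\mathbf{z}+M\tilde{\mathbf{z}})\big)$. Then: (i) $(\mathbf{a},\tilde{\mathbf{a}})\in\mathcal{H}^N\times\mathcal{H}^N$ satisfies $0\in(\widetilde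 A+\widetilde B+\widetilde C)(\mathbf{a},\tilde{\mathbf{a}})$ if and only if $\mathbf{a}=\Gamma^{-1}(z,\dots,z)$ for some $z\in\mathcal{H}$ with $0\in\sum_{i=1}^N(A_i+B_i)(z)$; (ii) if $A_1,\dots,A_N$ are maximally monotone and each $B_i$ is monotone and $L_i$-Lipschitz continuous, then $\widetilde A$ and $\widetilde C$ are maximally monotone and $\widetilde B$ is monotone and $L$-Lipschitz continuous with $L=\max_i\{\gamma_i^2L_i\}$.
   Context: Real $N\times N$ matrices act on $\mathcal{H}^N$ via Kronecker product with the identity of $\mathcal{H}$; square roots and definiteness refer to these (symmetric positive semidefinite) matrices. A mixing matrix for a connected graph $(\{1,\dots,N\},\mathcal{E})$ is $W=(w_{ij})\in\mathbb{R}^{N\times N}$ with $w_{ij}=0$ if $i\ne j$ and $(i,j)\notin\mathcal{E}$, $W=W^\top$, $\ker(I-W)=\mathbb{R}\mathbf{1}$, and $-I\prec W\preceq I$. $N_{\{0\}}$ denotes the normal cone of $\{0\}\subset\mathcal{H}^N$: $N_{\{0\}}(0)=\mathcal{H}^N$, $N_{\{0\}}(\mathbf{w})=\varnothing$ for $\mathbf{w}\ne0$. *)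

(* Defs.v *)
From HB Require Import structures.
From mathcomp Require Import all_boot all_order all_algebra.
From mathcomp Require Import all_classical all_reals all_analysis.
Set Implicit Arguments. Unset Strict Implicit. Unset Printing Implicit Defensive.
Import Order.TTheory GRing.Theory Num.Theory.
Import numFieldNormedType.Exports.
Local Open Scope classical_set_scope.
Local Open Scope ring_scope.

Definition is_inner_product (R : realType) (H : completeNormedModType R)
    (ip : H -> H -> R) : Prop :=
  [/\ forall x y, ip x y = ip y x,
      forall x y z, ip (x + y) z = ip x z + ip y z,
      forall (a : R) x y, ip (a *: x) y = a * ip x y &
      forall x, ip x x = `|x| ^+ 2].

Definition monotone_op (R : realType) (V : zmodType) (ip : V -> V -> R)
    (T : V -> set V) : Prop :=
  forall x y u v, T x u -> T y v -> 0 <= ip (x - y) (u - v).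

Definition maximally_monotone (R : realType) (V : zmodType) (ip : V -> V -> R)
    (T : V -> set V) : Prop :=
  monotone_op ip T /\
  forall T' : V -> set V, monotone_op ip T' ->
    (forall x, T x `<=` T' x) -> T' = T.

Definition monotone_fun (R : realType) (V : zmodType) (ip : V -> V -> R)
    (f : V -> V) : Prop :=
  forall x y, 0 <= ip (x - y) (f x - f y).

Definition lipschitz_fun (R : realType) (V : zmodType) (ip : V -> V -> R)
    (L : R) (f : V -> V) : Prop :=
  forall x y, Num.sqrt (ip (f x - f y) (f x - f y))
              <= L * Num.sqrt (ip (x - y) (x - y)).

Definition ipN (R : realType) (H : completeNormedModType R) (N : nat)
    (ip : H -> H -> R) (x y : {ffun 'I_N -> H}) : R :=
  \sum_i ip (x i) (y i).

Definition ipNN (R : realType) (H : completeNormedModType R) (N : nat)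
    (ip : H -> H -> R) (p q : {ffun 'I_N -> H} * {ffun 'I_N -> H}) : R :=
  ipN ip p.1 q.1 + ipN ip p.2 q.2.

(* a real N x N matrix acting on H^N (Kronecker product with Id_H) *)
Definition mxact (R : realType) (H : completeNormedModType R) (N : nat)
    (P : 'M[R]_N) (x : {ffun 'I_N -> H}) : {ffun 'I_N -> H} :=
  [ffun i => \sum_j P i j *: x j].

Definition N0 (V : zmodType) (w : V) : set V := [set _ | w = 0].

Definition mx_psd (R : realType) (N : nat) (P : 'M[R]_N) : Prop :=
  forall x : 'cV[R]_N, 0 <= (x^T *m P *m x) 0 0.

Definition mx_pd (R : realType) (N : nat) (P : 'M[R]_N) : Prop :=
  forall x : 'cV[R]_N, x != 0 -> 0 < (x^T *m P *m x) 0 0.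

Definition vnorm2 (R : realType) (N : nat) (x : 'cV[R]_N) : R :=
  Num.sqrt (\sum_i x i 0 ^+ 2).

Definition mx_opnorm (R : realType) (N : nat) (P : 'M[R]_N) : R :=
  sup [set vnorm2 (P *m x) | x in [set x : 'cV[R]_N | vnorm2 x <= 1]].

Definition connected_graph (N : nat) (E : rel 'I_N) : Prop :=
  symmetric E /\ forall i j, connect E i j.

Definition mixing_matrix (R : realType) (N : nat) (E : rel 'I_N)
    (W : 'M[R]_N) : Prop :=
  [/\ forall i j, i != j -> ~~ E i j -> W i j = 0,
      W^T = W,
      (forall x : 'cV[R]_N, (1%:M - W) *m x = 0 <-> exists t : R, x = const_mx t),
      mx_pd (W + 1%:M) &
      mx_psd (1%:M - W)].

Section Ops.
Variables (R : realType) (H : completeNormedModType R) (N : nat).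
Variables (A : 'I_N -> H -> set H) (B : 'I_N -> H -> H).
Variables (G K M : 'M[R]_N).

Definition Aprod (x : {ffun 'I_N -> H}) : set {ffun 'I_N -> H} :=
  [set y | forall i, A i (x i) (y i)].

Definition Bprod (x : {ffun 'I_N -> H}) : {ffun 'I_N -> H} :=
  [ffun i => B i (x i)].

Definition Atilde (p : {ffun 'I_N -> H} * {ffun 'I_N -> H})
    : set ({ffun 'I_N -> H} * {ffun 'I_N -> H}) :=
  [set q | ((mxact G) @` Aprod (mxact G p.1)) q.1 /\ N0 p.2 q.2].

Definition Btilde (p : {ffun 'I_N -> H} * {ffun 'I_N -> H})
    : {ffun 'I_N -> H} * {ffun 'I_N -> H} :=
  (mxact G (Bprod (mxact G p.1)), 0).

(* C~ = L^* o N_{0} o L with L(z, z~) = K G z + M z~ *)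
Definition Ctilde (p : {ffun 'I_N -> H} * {ffun 'I_N -> H})
    : set ({ffun 'I_N -> H} * {ffun 'I_N -> H}) :=
  [set (mxact (G *m K) v, mxact M v) | v in
      N0 (mxact (K *m G) p.1 + mxact M p.2)].

Definition ABCtilde (p : {ffun 'I_N -> H} * {ffun 'I_N -> H})
    : set ({ffun 'I_N -> H} * {ffun 'I_N -> H}) :=
  [set q | exists a c, Atilde p a /\ Ctilde p c /\ q = a + Btilde p + c].
End Ops.

(* Main.v *)
Require Import Defs.
From HB Require Import structures.
From mathcomp Require Import all_boot all_order all_algebra.
From mathcomp Require Import all_classical all_reals all_analysis.
Import Order.TTheory GRing.Theory Num.Theory.
Import numFieldNormedType.Exports.
Local Open Scope classical_set_scope.
Local Open Scope ring_scope.
Set Implicit Arguments. Unset Strict Implicit.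

Section IP.
Variables (R : realType) (H : completeNormedModType R) (ip : H -> H -> R).
Hypothesis Hip : is_inner_product ip.

Lemma ipC x y : ip x y = ip y x. Proof. by case: Hip. Qed.
Lemma ipDl x y z : ip (x + y) z = ip x z + ip y z. Proof. by case: Hip. Qed.
Lemma ipZl a x y : ip (a *: x) y = a * ip x y. Proof. by case: Hip. Qed.
Lemma ipDr x y z : ip z (x + y) = ip z x + ip z y.
Proof. by rewrite ipC ipDl !(ipC z). Qed.
Lemma ipZr a x y : ip y (a *: x) = a * ip y x.
Proof. by rewrite ipC ipZl ipC. Qed.
Lemma ip0l y : ip 0 y = 0.
Proof. by rewrite -(scale0r (0:H)) ipZl mul0r. Qed.
Lemma ip0r y : ip y 0 = 0.
Proof. by rewrite ipC ip0l. Qed.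
Lemma ipNl x y : ip (- x) y = - ip x y.
Proof. by rewrite -scaleN1r ipZl mulN1r. Qed.
Lemma ipNr x y : ip y (- x) = - ip y x.
Proof. by rewrite -scaleN1r ipZr mulN1r. Qed.
Lemma ipBl x y z : ip (x - y) z = ip x z - ip y z.
Proof. by rewrite ipDl ipNl. Qed.
Lemma ipBr x y z : ip z (x - y) = ip z x - ip z y.
Proof. by rewrite ipDr ipNr. Qed.
Lemma ip_NN x y : ip (- x) (- y) = ip x y.
Proof. by rewrite ipNl ipNr opprK. Qed.
Lemma ip_suml (I : finType) (f : I -> H) y :
  ip (\sum_i f i) y = \sum_i ip (f i) y.
Proof.
elim/big_ind2: _ => //; first by rewrite ip0l.
by move=> a b c d <- <-; rewrite ipDl.
Qed.
Lemma ip_sumr (I : finType) (f : I -> H) y :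
  ip y (\sum_i f i) = \sum_i ip y (f i).
Proof. rewrite ipC ip_suml; apply: eq_bigr => i _; exact: ipC. Qed.
Lemma ip_ge0 x : 0 <= ip x x.
Proof. by case: Hip => _ _ _ ->; rewrite exprn_ge0. Qed.
Lemma ip_eq0 x : ip x x = 0 -> x = 0.
Proof.
case: Hip => _ _ _ -> /eqP; rewrite sqrf_eq0 normr_eq0 => /eqP //.
Qed.
End IP.

Section MX.
Variables (R : realType) (H : completeNormedModType R) (N : nat).
Implicit Types (P Q : 'M[R]_N) (x y : {ffun 'I_N -> H}).

Lemma mxactE P x i : mxact P x i = \sum_j P i j *: x j.
Proof. by rewrite ffunE. Qed.
Lemma mxactD P x y : mxact P (x + y) = mxact P x + mxact P y.
Proof.
apply/ffunP => i; rewrite !ffunE -big_split /=; apply: eq_bigr => j _.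
by rewrite ffunE scalerDr.
Qed.
Lemma mxact0 P : mxact P (0 : {ffun 'I_N -> H}) = 0.
Proof.
apply/ffunP => i; rewrite !ffunE big1 // => j _; by rewrite ffunE scaler0.
Qed.
Lemma mxactN P x : mxact P (- x) = - mxact P x.
Proof.
apply/ffunP => i; rewrite !ffunE -sumrN; apply: eq_bigr => j _.
by rewrite ffunE scalerN.
Qed.
Lemma mxactB P x y : mxact P (x - y) = mxact P x - mxact P y.
Proof. by rewrite mxactD mxactN. Qed.
Lemma mxact_mul P Q x : mxact (P *m Q) x = mxact P (mxact Q x).
Proof.
apply/ffunP => i; rewrite !ffunE.
under eq_bigr => j _ do rewrite mxE scaler_suml.
rewrite exchange_big /=; apply: eq_bigr => k _.
rewrite ffunE scaler_sumr; apply: eq_bigr => j _; by rewrite scalerA.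
Qed.
Lemma mxact_addm P Q x : mxact (P + Q) x = mxact P x + mxact Q x.
Proof.
apply/ffunP => i; rewrite !ffunE -big_split /=; apply: eq_bigr => j _.
by rewrite mxE scalerDl.
Qed.
Lemma mxact_scalem a P x : mxact (a *: P) x = a *: mxact P x.
Proof.
apply/ffunP => i; rewrite !ffunE scaler_sumr; apply: eq_bigr => j _.
by rewrite mxE scalerA.
Qed.
Lemma mxact_diag (d : 'rV[R]_N) x i : mxact (diag_mx d) x i = d 0 i *: x i.
Proof.
rewrite ffunE (bigD1 i) //= big1 ?addr0; first by rewrite mxE eqxx mulr1n.
by move=> j /negPf ji; rewrite mxE eq_sym ji mulr0n scale0r.
Qed.
Lemma mxact1 x : mxact 1%:M x = x.
Proof.
apply/ffunP => i; rewrite ffunE (bigD1 i) //= big1 ?addr0; first by rewrite mxE eqxx mulr1n scale1r.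
by move=> j /negPf ji; rewrite mxE eq_sym ji mulr0n scale0r.
Qed.

Variable (ip : H -> H -> R).
Hypothesis Hip : is_inner_product ip.

Lemma ipN_mxact P x y : ipN ip (mxact P x) y = ipN ip x (mxact P^T y).
Proof.
rewrite /ipN.
under eq_bigr => i _ do rewrite mxactE (ip_suml Hip).
rewrite exchange_big /=; apply: eq_bigr => j _.
rewrite mxactE (ip_sumr Hip); apply: eq_bigr => i _.
by rewrite (ipZl Hip) (ipZr Hip) mxE.
Qed.

Definition ipvec x (h : H) : 'cV[R]_N := \col_j ip (x j) h.
Lemma ipvec_mxact P x h : P *m ipvec x h = ipvec (mxact P x) h.
Proof.
apply/matrixP => i k; rewrite !mxE mxactE (ip_suml Hip).
apply: eq_bigr => j _; by rewrite !mxE (ipZl Hip).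
Qed.

Lemma ker_const (W : 'M[R]_N) :
  (forall x : 'cV[R]_N, (1%:M - W) *m x = 0 <-> exists t : R, x = const_mx t) ->
  forall x, mxact (1%:M - W) x = 0 -> forall i j, x i = x j.
Proof.
move=> hW x hx i j.
have hc h : ipvec x h i 0 = ipvec x h j 0.
  have [t ->] : exists t, ipvec x h = const_mx t.
    by apply/hW; rewrite ipvec_mxact hx; apply/matrixP=> a b; rewrite !mxE ffunE (ip0l Hip).
  by rewrite !mxE.
apply/eqP; rewrite -subr_eq0; apply/eqP/(ip_eq0 Hip).
rewrite (ipBl Hip); have := hc (x i - x j); rewrite !mxE => ->.
by rewrite subrr.
Qed.

Lemma ipN_ge0 x : 0 <= ipN ip x x.
Proof. by apply: sumr_ge0 => i _; exact: ip_ge0. Qed.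

Lemma ipN_eq0 x : ipN ip x x = 0 -> x = 0.
Proof.
move=> h; apply/ffunP => i; rewrite ffunE; apply: (ip_eq0 Hip).
by apply: (psumr_eq0P (P := predT) _ h) => // j _; exact: ip_ge0.
Qed.
End MX.
Section RealMx.
Variables (R : realType) (N : nat).
Implicit Types (P Q K W : 'M[R]_N).

Lemma cv_eq0 (u : 'cV[R]_N) : (u^T *m u) 0 0 = 0 -> u = 0.
Proof.
rewrite mxE => h; apply/matrixP => i k; rewrite (ord1 k) !mxE.
have pos : forall j, predT j -> 0 <= u^T 0 j * u j 0.
  by move=> j _; rewrite mxE -expr2 sqr_ge0.
have := psumr_eq0P pos h (i := i) isT.
by rewrite mxE => /eqP; rewrite mulf_eq0 orbb => /eqP.
Qed.

Lemma col_mulmx m (A : 'M[R]_(m, N)) (B : 'M[R]_N) j :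
  A *m col j B = col j (A *m B).
Proof. by rewrite !colE mulmxA. Qed.

Lemma mx_colP m (A B : 'M[R]_(m, N)) : (forall j, col j A = col j B) -> A = B.
Proof.
move=> h; apply/matrixP => i j; move/matrixP: (h j) => /(_ i 0).
by rewrite !mxE.
Qed.

Lemma two_KK K W : K *m K = 2^-1 *: (1%:M - W) -> 1%:M - W = 2 *: (K *m K).
Proof. by move=> ->; rewrite scalerA mulfV ?scale1r // pnatr_eq0. Qed.

Hypothesis (W K : 'M[R]_N).
Hypothesis hW : forall x : 'cV[R]_N, (1%:M - W) *m x = 0 <-> exists t : R, x = const_mx t.
Hypothesis KT : K^T = K.
Hypothesis KK : K *m K = 2^-1 *: (1%:M - W).

Lemma K_const1 : K *m const_mx 1 = 0 :> 'cV[R]_N.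
Proof.
apply: cv_eq0.
have h0 : (1%:M - W) *m const_mx 1 = 0 :> 'cV[R]_N by apply/hW; exists 1.
rewrite trmx_mul KT -mulmxA (mulmxA K K) KK -scalemxAl h0 scaler0 mulmx0.
by rewrite mxE.
Qed.

Lemma K_rowsum i : \sum_j K i j = 0.
Proof.
move/matrixP: K_const1 => /(_ i 0); rewrite !mxE => h.
rewrite -[RHS]h; apply: eq_bigr => j _; by rewrite mxE mulr1.
Qed.

Lemma K_colsum j : \sum_i K i j = 0.
Proof.
rewrite -[RHS](K_rowsum j); apply: eq_bigr => i _.
by rewrite -{1}KT mxE.
Qed.

Lemma K_kerconst (c : 'cV[R]_N) : K *m c = 0 -> exists t, c = const_mx t.
Proof.
move=> h; apply/hW; rewrite (two_KK KK) -scalemxAl -mulmxA h mulmx0 scaler0 //.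
Qed.

Definition Pmx : 'M[R]_N := 1%:M - N%:R^-1 *: const_mx 1.

Lemma Pmx_const t : Pmx *m const_mx t = 0 :> 'cV[R]_N.
Proof.
apply/matrixP => i k; rewrite /Pmx mulmxBl mul1mx -scalemxAl !mxE.
have hN : N%:R != 0 :> R by rewrite pnatr_eq0 -lt0n (leq_ltn_trans _ (ltn_ord i)).
under eq_bigr => j _ do rewrite !mxE mul1r.
by rewrite sumr_const card_ord -[t *+ N]mulr_natr mulrCA mulVf // mulr1 subrr.
Qed.

Lemma K_pinv : exists K' : 'M[R]_N, K *m K' = Pmx.
Proof.
have sub : (Pmx <= K)%MS.
  rewrite submxE; apply/eqP/mx_colP => j.
  rewrite -col_mulmx.
  have [t ->] : exists t, col j (cokermx K) = const_mx t.
    by apply: K_kerconst; rewrite col_mulmx mulmx_coker; apply/matrixP=> a b; rewrite !mxE.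
  by rewrite Pmx_const; apply/matrixP=> a b; rewrite !mxE.
exists ((pinvmx K)^T *m Pmx).
have := congr1 trmx (mulmxKpV sub); rewrite !trmx_mul KT.
have PT : Pmx^T = Pmx by rewrite /Pmx linearB /= trmx1 linearZ /= trmx_const.
by rewrite PT mulmxA.
Qed.

Lemma pd_unit (M : 'M[R]_N) : mx_pd M -> M \in unitmx.
Proof.
move=> hM; rewrite -row_full_unit -cokermx_eq0; apply/eqP/mx_colP => j.
set c := col j _.
have Mc : M *m c = 0 by rewrite col_mulmx mulmx_coker; apply/matrixP=> a b; rewrite !mxE.
have [->|nz] := eqVneq c 0; first by apply/matrixP=> a b; rewrite !mxE.
by have := hM c nz; rewrite -mulmxA Mc mulmx0 mxE ltxx.
Qed.

End RealMx.
Section IPN.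
Variables (R : realType) (H : completeNormedModType R) (N : nat) (ip : H -> H -> R).
Hypothesis Hip : is_inner_product ip.
Implicit Types (x y z : {ffun 'I_N -> H}) (p q r : {ffun 'I_N -> H} * {ffun 'I_N -> H}).

Lemma ipN_C x y : ipN ip x y = ipN ip y x.
Proof. by apply: eq_bigr => i _; rewrite (ipC Hip). Qed.
Lemma ipN_Dl x y z : ipN ip (x + y) z = ipN ip x z + ipN ip y z.
Proof. by rewrite /ipN -big_split; apply: eq_bigr => i _; rewrite ffunE (ipDl Hip). Qed.
Lemma ipN_Zl a x y : ipN ip (a *: x) y = a * ipN ip x y.
Proof. by rewrite /ipN mulr_sumr; apply: eq_bigr => i _; rewrite ffunE (ipZl Hip). Qed.
Lemma ipN_Nl x y : ipN ip (- x) y = - ipN ip x y.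
Proof. by rewrite /ipN -sumrN; apply: eq_bigr => i _; rewrite ffunE (ipNl Hip). Qed.
Lemma ipN_Bl x y z : ipN ip (x - y) z = ipN ip x z - ipN ip y z.
Proof. by rewrite ipN_Dl ipN_Nl. Qed.
Lemma ipN_Dr x y z : ipN ip z (x + y) = ipN ip z x + ipN ip z y.
Proof. by rewrite ipN_C ipN_Dl !(ipN_C z). Qed.
Lemma ipN_Zr a x y : ipN ip y (a *: x) = a * ipN ip y x.
Proof. by rewrite ipN_C ipN_Zl ipN_C. Qed.
Lemma ipN_Nr x y : ipN ip y (- x) = - ipN ip y x.
Proof. by rewrite ipN_C ipN_Nl ipN_C. Qed.
Lemma ipN_Br x y z : ipN ip z (x - y) = ipN ip z x - ipN ip z y.
Proof. by rewrite ipN_Dr ipN_Nr. Qed.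
Lemma ipN_0l y : ipN ip 0 y = 0.
Proof. by rewrite /ipN big1 // => i _; rewrite ffunE (ip0l Hip). Qed.
Lemma ipN_0r y : ipN ip y 0 = 0.
Proof. by rewrite ipN_C ipN_0l. Qed.
Lemma ipN_mxact_r P x y : ipN ip x (mxact P y) = ipN ip (mxact P^T x) y.
Proof. by rewrite ipN_C (ipN_mxact Hip) ipN_C. Qed.

Lemma ipNN_C p q : ipNN ip p q = ipNN ip q p.
Proof. by rewrite /ipNN !(ipN_C p.1) (ipN_C p.2). Qed.
Lemma ipNN_Dl p q r : ipNN ip (p + q) r = ipNN ip p r + ipNN ip q r.
Proof. by rewrite /ipNN /= !ipN_Dl addrACA. Qed.
Lemma ipNN_Nl p q : ipNN ip (- p) q = - ipNN ip p q.
Proof. by rewrite /ipNN /= !ipN_Nl opprD. Qed.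
Lemma ipNN_Bl p q r : ipNN ip (p - q) r = ipNN ip p r - ipNN ip q r.
Proof. by rewrite ipNN_Dl ipNN_Nl. Qed.
Lemma ipNN_Br p q r : ipNN ip r (p - q) = ipNN ip r p - ipNN ip r q.
Proof. by rewrite ipNN_C ipNN_Bl !(ipNN_C r). Qed.
Lemma ipNN_NN p q : ipNN ip (- p) (- q) = ipNN ip p q.
Proof. by rewrite ipNN_Nl ipNN_C ipNN_Nl opprK ipNN_C. Qed.
Lemma ipNN_00 : ipNN (N:=N) ip 0 0 = 0.
Proof. by rewrite /ipNN /= ipN_0l addr0. Qed.
End IPN.

Section Mono.
Variables (R : realType) (V : zmodType) (ip : V -> V -> R).
Hypothesis ipNN' : forall x y, ip (- x) (- y) = ip x y.
Hypothesis ip00 : ip 0 0 = 0.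

Lemma mm_closure T : maximally_monotone ip T -> forall a b,
  (forall y v, T y v -> 0 <= ip (a - y) (b - v)) -> T a b.
Proof.
case=> monoT maxT a b hab.
pose T' := fun x => [set u | T x u \/ (x = a /\ u = b)].
have monoT' : monotone_op ip T'.
  move=> x y u v [Txu|[-> ->]] [Tyv|[-> ->]].
  - exact: monoT.
  - by rewrite -ipNN' !opprB; apply: hab.
  - exact: hab.
  - by rewrite !subrr ip00.
have := maxT T' monoT' (fun x u h => or_introl h).
move=> /(congr1 (fun F => F a b)) <-; by right.
Qed.

Lemma mm_exists_le0 T : maximally_monotone ip T -> forall a b,
  exists y v, T y v /\ ip (a - y) (b - v) <= 0.
Proof.
move=> hT a b.
case: (pselect (exists y v, T y v /\ ip (a - y) (b - v) < 0)).
  by move=> [y [v [h1 h2]]]; exists y, v; split => //; apply: ltW.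
move=> hn; exists a, b; split; last by rewrite !subrr ip00.
apply: (mm_closure hT) => y v Tyv; rewrite leNgt; apply/negP => hlt.
by apply: hn; exists y, v.
Qed.

Lemma mm_intro T : monotone_op ip T ->
  (forall a b, (forall y v, T y v -> 0 <= ip (a - y) (b - v)) -> T a b) ->
  maximally_monotone ip T.
Proof.
move=> monoT cl; split => // T' monoT' sub.
apply: funext => x; apply/seteqP; split => u; last exact: sub.
move=> T'xu; apply: cl => y v Tyv; apply: monoT' => //; exact: sub.
Qed.
End Mono.
From mathcomp Require Import lra ring.
Lemma ffB (R : realType) (H : completeNormedModType R) N (f g : {ffun 'I_N -> H}) i : (f - g) i = f i - g i.
Proof. by rewrite !ffunE. Qed.
Lemma ffD (R : realType) (H : completeNormedModType R) N (f g : {ffun 'I_N -> H}) i : (f + g) i = f i + g i.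
Proof. by rewrite !ffunE. Qed.
Lemma ffN (R : realType) (H : completeNormedModType R) N (f : {ffun 'I_N -> H}) i : (- f) i = - f i.
Proof. by rewrite !ffunE. Qed.
Lemma ff0 (R : realType) (H : completeNormedModType R) N i : (0 : {ffun 'I_N -> H}) i = 0.
Proof. by rewrite !ffunE. Qed.

Section GG.
Variables (R : realType) (H : completeNormedModType R) (N : nat) (ip : H -> H -> R).
Hypothesis Hip : is_inner_product ip.
Variable gamma : 'I_N -> R.
Hypothesis hg : forall i, 0 < gamma i.
Let G := diag_mx (\row_i gamma i).

Lemma mxactG (x : {ffun 'I_N -> H}) i : mxact G x i = gamma i *: x i.
Proof. by rewrite mxact_diag mxE. Qed.
Lemma GT : G^T = G. Proof. exact: tr_diag_mx. Qed.
Lemma G_unit : G \in unitmx.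
Proof.
rewrite unitmxE det_diag unitfE; apply/prodf_neq0 => i _.
by rewrite mxE gt_eqF.
Qed.
Lemma GGi (x : {ffun 'I_N -> H}) : mxact G (mxact (invmx G) x) = x.
Proof. by rewrite -mxact_mul mulmxV ?G_unit // mxact1. Qed.
Lemma GiG (x : {ffun 'I_N -> H}) : mxact (invmx G) (mxact G x) = x.
Proof. by rewrite -mxact_mul mulVmx ?G_unit // mxact1. Qed.

Variable A : 'I_N -> H -> set H.

Lemma Atilde_ipid (p q : {ffun 'I_N -> H} * {ffun 'I_N -> H}) (u v w : {ffun 'I_N -> H}) :
  ipNN ip (p - (mxact (invmx G) u, 0)) (q - (mxact G v, w)) =
  ipN ip (mxact G p.1 - u) (mxact (invmx G) q.1 - v) + ipN ip p.2 (q.2 - w).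
Proof.
rewrite /ipNN /= subr0; congr (_ + _).
rewrite -{1}(GGi q.1) -mxactB (ipN_mxact_r Hip) GT mxactB GGi //.
Qed.

Lemma Atilde_gra (u v w : {ffun 'I_N -> H}) : Aprod A u v ->
  Atilde A G (mxact (invmx G) u, 0) (mxact G v, w).
Proof. move=> h; split => //=; exists v => //; by rewrite GGi. Qed.

Lemma Atilde_mm : (forall i, maximally_monotone ip (A i)) ->
  maximally_monotone (ipNN ip) (Atilde A G).
Proof.
move=> hA; apply: mm_intro.
  move=> p p' q q' [[y Ay Ey] /= p2] [[y' Ay' Ey'] /= p2'].
  rewrite /ipNN /= p2 p2' subrr (ipN_0l Hip) addr0 -Ey -Ey' -mxactB.
  rewrite (ipN_mxact_r Hip) GT mxactB; apply: sumr_ge0 => i _.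
  rewrite !ffB; apply: (hA i).1; [exact: Ay | exact: Ay'].
move=> p q hcl.
set a := mxact G p.1; set b := mxact (invmx G) q.1.
have ipNN' : forall x y, ip (- x) (- y) = ip x y by move=> x y; rewrite (ip_NN Hip).
have ip00 : ip 0 0 = 0 by rewrite (ip0l Hip).
have : forall i, exists uv : H * H, A i uv.1 uv.2 /\ ip (a i - uv.1) (b i - uv.2) <= 0.
  move=> i; have [y [v [h1 h2]]] := mm_exists_le0 ipNN' ip00 (hA i) (a i) (b i).
  by exists (y, v).
move=> /fin_all_exists [f hf].
pose u0 : {ffun 'I_N -> H} := [ffun i => (f i).1].
pose v0 : {ffun 'I_N -> H} := [ffun i => (f i).2].
have u0E i : u0 i = (f i).1 by rewrite ffunE.
have v0E i : v0 i = (f i).2 by rewrite ffunE.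
have neg0 : ipN ip (a - u0) (b - v0) <= 0.
  rewrite /ipN; apply: sumr_le0 => i _; rewrite !ffB u0E v0E; exact: (hf i).2.
have gra0 : Aprod A u0 v0 by move=> i; rewrite u0E v0E; exact: (hf i).1.
have p20 : p.2 = 0.
  have := hcl _ _ (Atilde_gra (q.2 + p.2) gra0).
  rewrite Atilde_ipid opprD addrA subrr add0r (ipN_Nr Hip) => h.
  apply: (ipN_eq0 Hip); apply/eqP; rewrite eq_le ipN_ge0 //; lra.
have hAi : forall i, A i (a i) (b i).
  move=> i; apply: (mm_closure ipNN' ip00 (hA i)) => y v Ayv.
  pose u1 : {ffun 'I_N -> H} := [ffun j => if j == i then y else u0 j].
  pose v1 : {ffun 'I_N -> H} := [ffun j => if j == i then v else v0 j].
  have gra1 : Aprod A u1 v1.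
    move=> j; rewrite /u1 /v1 !ffunE; case: eqP => [->|_] //; by have := gra0 j; rewrite u0E v0E.
  have := hcl _ _ (Atilde_gra q.2 gra1).
  rewrite Atilde_ipid subrr (ipN_0r Hip) addr0 /ipN (bigD1 i) //=.
  have u1E j : u1 j = if j == i then y else u0 j by rewrite ffunE.
  have v1E j : v1 j = if j == i then v else v0 j by rewrite ffunE.
  rewrite !ffB u1E v1E eqxx.
  have : \sum_(j | j != i) ip ((a - u1) j) ((b - v1) j) <= 0.
    apply: sumr_le0 => j /negPf ji; rewrite !ffB u1E v1E ji u0E v0E; exact: (hf j).2.
  move=> hs h; lra.
split => //=; exists b => //; by rewrite /b GGi.
Qed.
End GG.
Lemma mxactZ (R : realType) (H : completeNormedModType R) N (P : 'M[R]_N) a (x : {ffun 'I_N -> H}) :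
  mxact P (a *: x) = a *: mxact P x.
Proof.
apply/ffunP => i; rewrite !ffunE scaler_sumr; apply: eq_bigr => j _.
by rewrite ffunE !scalerA mulrC.
Qed.

Section CC.
Variables (R : realType) (H : completeNormedModType R) (N : nat) (ip : H -> H -> R).
Hypothesis Hip : is_inner_product ip.
Variables (G K M : 'M[R]_N).
Hypotheses (GT' : G^T = G) (KT : K^T = K) (MT : M^T = M) (Mu : M \in unitmx).
Implicit Types (p q d : {ffun 'I_N -> H} * {ffun 'I_N -> H}) (v w : {ffun 'I_N -> H}).

Let Lop p := mxact (K *m G) p.1 + mxact M p.2.
Let Ladj v := (mxact (G *m K) v, mxact M v).

Lemma adj_id p v : ipNN ip p (Ladj v) = ipN ip (Lop p) v.
Proof.
rewrite /ipNN /= !(ipN_mxact_r Hip) trmx_mul GT' KT MT (ipN_Dl Hip) //.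
Qed.
Lemma Lop_D p d : Lop (p + d) = Lop p + Lop d.
Proof. by rewrite /Lop /= !mxactD addrACA. Qed.
Lemma Lop_N p : Lop (- p) = - Lop p.
Proof. by rewrite /Lop /= !mxactN opprD. Qed.
Lemma Ladj_B v w : Ladj v - Ladj w = Ladj (v - w).
Proof. by rewrite /Ladj !mxactB. Qed.
Lemma Ladj_0 : Ladj 0 = 0.
Proof. by rewrite /Ladj !mxact0. Qed.

Lemma Ctilde_gra p v : Lop p = 0 -> Ctilde G K M p (Ladj v).
Proof. by move=> h; exists v. Qed.

Lemma Ctilde_mm : maximally_monotone (ipNN ip) (Ctilde G K M).
Proof.
apply: mm_intro.
  move=> p p' q q' [v hv <-] [v' hv' <-].
  have hv0 : Lop p = 0 := hv.
  have hv0' : Lop p' = 0 := hv'.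
  rewrite (Ladj_B v v') adj_id Lop_D Lop_N hv0 hv0' subrr (ipN_0l Hip) //.
move=> p [q1 q2] hcl.
set X := ipNN ip p (q1, q2).
have Lp0 : Lop p = 0.
  have h s : 0 <= X - s * ipN ip (Lop p) (Lop p).
    have := hcl 0 (Ladj (s *: Lop p)) (Ctilde_gra _ _).
    rewrite subr0 (ipNN_Br Hip) adj_id (ipN_Zr Hip); apply.
    by rewrite /Lop /= !mxact0 addr0.
  apply: (ipN_eq0 Hip); apply/eqP; rewrite eq_le (ipN_ge0 Hip) andbT leNgt.
  apply/negP => cpos; have := h ((`|X| + 1) / ipN ip (Lop p) (Lop p)).
  rewrite divfK ?gt_eqF //; have := ler_norm X; lra.
have orth d : Lop d = 0 -> ipNN ip d (q1, q2) = 0.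
  move=> hd.
  have h1 := hcl (p + d) (Ladj 0) (Ctilde_gra _ (_ : _)).
  have h2 := hcl (p + - d) (Ladj 0) (Ctilde_gra _ (_ : _)).
  move: h1 h2; rewrite !Lop_D Lop_N hd Lp0 oppr0 !addr0 Ladj_0 subr0.
  rewrite !opprD !addrA subrr !add0r opprK (ipNN_Nl Hip).
  by move=> /(_ erefl) h1 /(_ erefl) h2; lra.
set Mi := invmx M.
set e := q1 - mxact (G *m K) (mxact Mi q2).
have MMi x : mxact M (mxact Mi x) = x by rewrite -mxact_mul mulmxV // mxact1.
have hd : Lop (e, - mxact (Mi *m (K *m G)) e) = 0.
  by rewrite /Lop /= mxactN (mxact_mul Mi (K *m G)) MMi subrr.
have := orth _ hd; rewrite /ipNN /= (ipN_Nl Hip) (ipN_mxact Hip).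
rewrite !trmx_mul trmx_inv MT KT GT' -(ipN_Br Hip) mxact_mul.
move=> /(ipN_eq0 Hip) e0.
exists (mxact Mi q2) => //; rewrite /Ladj MMi; congr (_, _).
by move/eqP: e0; rewrite /e subr_eq0 => /eqP.
Qed.
End CC.
Lemma le_bigmax0 (R : realType) (I : finType) (F : I -> R) i :
  F i <= \big[Num.max/0]_j F j.
Proof.
have : i \in index_enum I by rewrite mem_index_enum.
elim: (index_enum I) => // a r IH; rewrite inE big_cons /= le_max.
by case/orP => [/eqP ->|/IH ->]; rewrite ?lexx ?orbT.
Qed.

Lemma bigmax0_ge0 (R : realType) (I : finType) (F : I -> R) :
  0 <= \big[Num.max/0]_j F j.
Proof.
elim: (index_enum I) => [|a r IH]; first by rewrite big_nil.
by rewrite big_cons /= le_max IH orbT.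
Qed.

Section BB.
Variables (R : realType) (H : completeNormedModType R) (N : nat) (ip : H -> H -> R).
Hypothesis Hip : is_inner_product ip.
Variable gamma : 'I_N -> R.
Hypothesis hg : forall i, 0 < gamma i.
Let G := diag_mx (\row_i gamma i).
Variable B : 'I_N -> H -> H.

Lemma BprodE (x : {ffun 'I_N -> H}) i : Bprod B x i = B i (x i).
Proof. by rewrite ffunE. Qed.

Lemma Btilde_mono : (forall i, monotone_fun ip (B i)) ->
  monotone_fun (ipNN ip) (Btilde B G).
Proof.
move=> hB p p'; rewrite /ipNN /= subrr (ipN_0r Hip) addr0 -mxactB.
rewrite (ipN_mxact_r Hip) GT mxactB; apply: sumr_ge0 => i _.
rewrite !ffB !BprodE; exact: hB.
Qed.

Lemma Btilde_lip (Lc : 'I_N -> R) : (forall i, lipschitz_fun ip (Lc i) (B i)) ->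
  lipschitz_fun (ipNN ip) (\big[Num.max/0]_i (gamma i ^+ 2 * Lc i)) (Btilde B G).
Proof.
move=> hB p p'; set L := \big[Num.max/0]_i _.
have L0 : 0 <= L by apply: bigmax0_ge0.
have Li i : gamma i ^+ 2 * Lc i <= L by rewrite /L; apply: le_bigmax0.
have key : ipNN ip (Btilde B G p - Btilde B G p') (Btilde B G p - Btilde B G p')
    <= L ^+ 2 * ipNN ip (p - p') (p - p').
  rewrite /ipNN /= subrr (ipN_0l Hip) addr0 mulrDr.
  have h2 : 0 <= L ^+ 2 * ipN ip (p.2 - p'.2) (p.2 - p'.2).
    by apply: mulr_ge0; [exact: sqr_ge0 | exact: (ipN_ge0 Hip)].
  suff : ipN ip (mxact G (Bprod B (mxact G p.1)) - mxact G (Bprod B (mxact G p'.1)))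
     (mxact G (Bprod B (mxact G p.1)) - mxact G (Bprod B (mxact G p'.1)))
     <= L ^+ 2 * ipN ip (p.1 - p'.1) (p.1 - p'.1) by move=> h; lra.
  rewrite /ipN mulr_sumr; apply: ler_sum => i _.
  rewrite !ffB !mxactG !BprodE !mxactG -!scalerBr (ipZl Hip) (ipZr Hip).
  set d := B i _ - B i _; set e := p.1 i - p'.1 i.
  have := hB i (gamma i *: p.1 i) (gamma i *: p'.1 i).
  rewrite -scalerBr (ipZl Hip) (ipZr Hip) -/e mulrA -expr2.
  rewrite sqrtrM ?sqr_ge0 // sqrtr_sqr gtr0_norm // => hl.
  have sd0 : 0 <= Num.sqrt (ip d d) by apply: sqrtr_ge0.
  have se0 : 0 <= Num.sqrt (ip e e) by apply: sqrtr_ge0.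
  have g0 := hg i.
  have h1 : gamma i * Num.sqrt (ip d d) <= L * Num.sqrt (ip e e).
    apply: (le_trans (y := gamma i * (Lc i * (gamma i * Num.sqrt (ip e e))))).
      by apply: ler_wpM2l => //; apply: ltW.
    have -> : gamma i * (Lc i * (gamma i * Num.sqrt (ip e e))) =
      (gamma i ^+ 2 * Lc i) * Num.sqrt (ip e e) by rewrite expr2; ring.
    by apply: ler_wpM2r.
  rewrite -(sqr_sqrtr (ip_ge0 Hip d)) -(sqr_sqrtr (ip_ge0 Hip e)).
  set sd := Num.sqrt (ip d d) in sd0 h1 *; set se := Num.sqrt (ip e e) in se0 h1 *.
  have hh : 0 <= (L * se - gamma i * sd) * (L * se + gamma i * sd).
    apply: mulr_ge0; first by rewrite subr_ge0.
    by apply: addr_ge0; apply: mulr_ge0 => //; apply: ltW.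
  nra.
apply: (le_trans (y := Num.sqrt (L ^+ 2 * ipNN ip (p - p') (p - p')))).
  rewrite ler_sqrt //; apply: mulr_ge0; first exact: sqr_ge0.
  by apply: addr_ge0; apply: (ipN_ge0 Hip).
by rewrite sqrtrM ?sqr_ge0 // sqrtr_sqr ger0_norm.
Qed.
End BB.
Section PI.
Variables (R : realType) (H : completeNormedModType R) (N : nat) (ip : H -> H -> R).
Hypothesis Hip : is_inner_product ip.
Variable gamma : 'I_N -> R.
Hypothesis hg : forall i, 0 < gamma i.
Let G := diag_mx (\row_i gamma i).
Variables (W K M : 'M[R]_N).
Hypothesis hW : forall x : 'cV[R]_N, (1%:M - W) *m x = 0 <-> exists t : R, x = const_mx t.
Hypothesis KT : K^T = K.
Hypothesis KK : K *m K = 2^-1 *: (1%:M - W).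
Variables (A : 'I_N -> H -> set H) (B : 'I_N -> H -> H).

Lemma Pmx_act (s : {ffun 'I_N -> H}) : \sum_i s i = 0 -> mxact (@Pmx R N) s = s.
Proof.
move=> hs; rewrite /Pmx -scaleNr mxact_addm mxact_scalem mxact1.
have -> : mxact (const_mx 1) s = 0.
  apply/ffunP => i; rewrite !ffunE -[RHS]hs; apply: eq_bigr => j _.
  by rewrite mxE scale1r.
by rewrite scaler0 addr0.
Qed.

Lemma K_ffconst (z : H) : mxact K [ffun => z] = 0.
Proof.
apply/ffunP => i; rewrite !ffunE.
under eq_bigr => j _ do rewrite ffunE.
by rewrite -scaler_suml (K_rowsum hW KT KK) scale0r.
Qed.

Lemma sumK (v : {ffun 'I_N -> H}) : \sum_i mxact K v i = 0.
Proof.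
under eq_bigr => i _ do rewrite mxactE.
rewrite exchange_big /= big1 // => j _.
by rewrite -scaler_suml (K_colsum hW KT KK) scale0r.
Qed.

Lemma Kker_const (x : {ffun 'I_N -> H}) : mxact K x = 0 -> forall i j, x i = x j.
Proof.
move=> h; apply: (ker_const Hip hW).
by rewrite (two_KK KK) mxact_scalem mxact_mul h mxact0 scaler0.
Qed.

Lemma part_i a a2 :
  ABCtilde A B G K M (a, a2) 0 <->
  (a2 = 0 /\
   exists z : H,
     a = mxact (invmx G) [ffun => z] /\
     exists y : 'I_N -> H,
       (forall i, A i z (y i)) /\ \sum_i (y i + B i z) = 0).
Proof.
split.
  move=> [[t1 t2] [[c1 c2] [[[y Ay Ey] /= a20] [[v hv Ec] E0]]]].
  case: Ec => Ec1 Ec2.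
  have E1 := congr1 fst E0; rewrite /= in E1.
  have hv0 : mxact (K *m G) a + mxact M a2 = 0 := hv.
  rewrite a20 mxact0 addr0 mxact_mul in hv0.
  set x := mxact G a in hv0 Ay.
  have xc := Kker_const hv0.
  pose z := if [pick i : 'I_N] is Some i then x i else 0.
  have xz : x = [ffun => z].
    apply/ffunP => i; rewrite [in RHS]ffunE /z; case: pickP => [j _|h]; first exact: xc.
    by have := h i.
  split => //; exists z; split; first by rewrite -xz /x GiG.
  exists y; split; first by move=> i; have := Ay i; rewrite xz ffunE.
  have : y + Bprod B x + mxact K v = 0.
    rewrite -[LHS](GiG hg) -[RHS](GiG hg (0 : {ffun 'I_N -> H})) mxact0.
    congr mxact; rewrite !mxactD Ey -mxact_mul Ec1 -E1 //.
  move=> /(congr1 (fun f : {ffun 'I_N -> H} => \sum_i f i)).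
  move=> hsum.
  have e1 : \sum_i (y i + B i z) =
      \sum_i (y + Bprod B x + mxact K v) i - \sum_i mxact K v i.
    rewrite -sumrB; apply: eq_bigr => i _.
    have xi : x i = z by rewrite xz ffunE.
    by rewrite !ffD BprodE xi addrK.
  rewrite e1 hsum sumK subr0 big1 // => i _; exact: ff0.
move=> [-> [z [-> [y [Ay hs]]]]].
set x : {ffun 'I_N -> H} := [ffun => z].
pose s : {ffun 'I_N -> H} := [ffun i => y i + B i z].
have hs' : \sum_i s i = 0 by rewrite -[RHS]hs; apply: eq_bigr => i _; rewrite ffunE.
have [K' KK'] := K_pinv hW KT KK.
pose v := - mxact K' s.
have Kv : mxact K v = - s by rewrite mxactN -mxact_mul KK' Pmx_act.
pose y' : {ffun 'I_N -> H} := [ffun i => y i].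
exists (mxact G y', - mxact M v), (mxact (G *m K) v, mxact M v).
split.
  split => //=; exists y' => //; rewrite GGi // => i; rewrite !ffunE; exact: Ay.
split.
  exists v => //; rewrite /N0 /= mxact0 addr0 mxact_mul GGi // K_ffconst //.
apply: injective_projections => /=; last by rewrite addr0 addrC subrr.
rewrite GGi // mxact_mul -!mxactD.
have -> : y' + Bprod B x + mxact K v = 0.
  rewrite Kv; apply/ffunP => i; rewrite !ffD ffN BprodE !ffunE subrr //.
by rewrite mxact0.
Qed.
End PI.

Theorem lemma3p3 (R : realType) (H : completeNormedModType R)
    (ip : H -> H -> R) (N : nat) (E : rel 'I_N) (W : 'M[R]_N)
    (A : 'I_N -> H -> set H) (B : 'I_N -> H -> H)
    (gamma : 'I_N -> R) (K M : 'M[R]_N) (c : R) :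
  is_inner_product ip ->
  connected_graph E ->
  mixing_matrix E W ->
  (forall i, 0 < gamma i) ->
  let G := diag_mx (\row_i gamma i) in
  K^T = K -> mx_psd K -> K *m K = 2^-1 *: (1%:M - W) ->
  mx_opnorm (G *m K *m K *m G) < c ->
  M^T = M -> mx_pd M -> M *m M = c%:M - K *m G *m G *m K ->
  (* (i) *)
  (forall a a2 : {ffun 'I_N -> H},
     ABCtilde A B G K M (a, a2) 0 <->
     (a2 = 0 /\
      exists z : H,
        a = mxact (invmx G) [ffun => z] /\
        exists y : 'I_N -> H,
          (forall i, A i z (y i)) /\ \sum_i (y i + B i z) = 0))
  /\
  (* (ii) *)
  (forall Lc : 'I_N -> R,
     (forall i, maximally_monotone ip (A i)) ->
     (forall i, monotone_fun ip (B i)) ->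
     (forall i, lipschitz_fun ip (Lc i) (B i)) ->
     maximally_monotone (ipNN ip) (Atilde A G) /\
     maximally_monotone (ipNN ip) (Ctilde G K M) /\
     monotone_fun (ipNN ip) (Btilde B G) /\
     lipschitz_fun (ipNN ip) (\big[Num.max/0]_i (gamma i ^+ 2 * Lc i))
       (Btilde B G)).
Proof.
move=> Hip _ [_ _ hW _ _] hg G KT _ KK _ MT Mpd _.
split.
  move=> a a2; exact: (part_i Hip hg M hW KT KK A B a a2).
move=> Lc hA hB hL.
split; first exact: (Atilde_mm Hip hg hA).
split; first exact: (Ctilde_mm Hip (tr_diag_mx _) KT MT (pd_unit Mpd)).
split; first exact: (Btilde_mono Hip gamma hB).
exact: (Btilde_lip Hip hg hL).
Qed.
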